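(* Let $\mathcal{X},\mathcal{Y}$ be finite sets with $|\mathcal{X}|,|\mathcal{Y}|\ge 2$, let $\mathcal{A}=\mathcal{B}=\{0,1\}$, and let $\epsilon_A,\epsilon_B\in[0,1)$. Then for every extreme point (vertex) $p^{ext}$ of the set $\mathcal{P}_2^{AB,(\epsilon_A,\epsilon_B)}$ and all $a,b,x,y$, one has $$p^{ext}(ab|xy)=\alpha\cdot\beta\quad\text{for some }\alpha\in\{0,\epsilon_A,1-\epsilon_A,1\},\ \beta\in\{0,\epsilon_B,1-\epsilon_B,1\}.$$ More precisely, every vertex is of the form $p^{ext}(ab|xy)=p_A(a|xy)\,p_B(b|xy)$ with $p_A(a|xy)\in\{0,\epsilon_A,1-\epsilon_A,1\}$ and $p_B(b|xy)\in\{0,\epsilon_B,1-\epsilon_B,1\}$ for all $a,b,x,y$.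
   Context: Let $\mathcal{X},\mathcal{Y},\mathcal{A},\mathcal{B}$ be finite sets (inputs of Alice, inputs of Bob, outputs of Alice, outputs of Bob). For $\epsilon_A,\epsilon_B\in[0,1]$, $\mathcal{P}_2^{AB,(\epsilon_A,\epsilon_B)}$ denotes the set of all conditional distributions $p=(p(ab|xy))_{a,b,x,y}\in\mathbb{R}^{\mathcal{A}\times\mathcal{B}\times\mathcal{X}\times\mathcal{Y}}$ for which there exist a probability space $(\Lambda,q)$ and measurable families of probability distributions $p_A(\cdot|x,y,\lambda)$ on $\mathcal{A}$ and $p_B(\cdot|x,y,\lambda)$ on $\mathcal{B}$ (for all $x,y,\lambda$) such that $p(ab|xy)=\int q(d\lambda)\,p_A(a|xy\lambda)\,p_B(b|xy\lambda)$ for all $a,b,x,y$, and $\frac12\sum_a|p_A(a|xy\lambda)-p_A(a|xy'\lambda)|\le\epsilon_A$ for all $x,y,y',\lambda$, and $\frac12\sum_b|p_B(b|xy\lambda)-p_B(b|x'y\lambda)|\le\epsilon_B$ for all $y,x,x',\lambda$ (''$(\epsilon_A,\epsilon_B)$-parameter-dependent'' behaviors obeying outcome independence). *)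

(* Defs.v *)
From HB Require Import structures.
From mathcomp Require Import all_boot all_order all_algebra.
From mathcomp Require Import all_classical all_reals all_analysis.
Set Implicit Arguments. Unset Strict Implicit. Unset Printing Implicit Defensive.
Import Order.TTheory GRing.Theory Num.Theory.
Local Open Scope ring_scope.
Local Open Scope classical_set_scope.

Definition behavior (R : realType) (X Y : finType) := bool -> bool -> X -> Y -> R.

Definition in_P2 (R : realType) (X Y : finType) (eA eB : R)
  (p : behavior R X Y) : Prop :=
  exists (d : measure_display) (L : measurableType d) (q : probability L R)
         (pA : X -> Y -> L -> bool -> R) (pB : X -> Y -> L -> bool -> R),
    (forall x y a, measurable_fun setT (fun l => pA x y l a)) /\
        (forall x y b, measurable_fun setT (fun l => pB x y l b)) /\
        (forall x y l, (forall a, 0 <= pA x y l a) /\ \sum_(a : bool) pA x y l a = 1) /\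
        (forall x y l, (forall b, 0 <= pB x y l b) /\ \sum_(b : bool) pB x y l b = 1) /\
        (forall x y y' l,
            2^-1 * \sum_(a : bool) `|pA x y l a - pA x y' l a| <= eA) /\
        (forall x x' y l,
            2^-1 * \sum_(b : bool) `|pB x y l b - pB x' y l b| <= eB) /\
        (forall a b x y,
            ((p a b x y)%:E =
             \int[q]_(l in setT) ((pA x y l a * pB x y l b)%:E))%E).

Definition extreme_point (R : realType) (X Y : finType)
  (S : behavior R X Y -> Prop) (p : behavior R X Y) : Prop :=
  S p /\
  forall (p1 p2 : behavior R X Y) (t : R), S p1 -> S p2 -> 0 < t < 1 ->
    p = (fun a b x y => t * p1 a b x y + (1 - t) * p2 a b x y) ->
    p1 = p /\ p2 = p.

(* Main.v *)
Require Import Defs.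
From HB Require Import structures.
From mathcomp Require Import all_boot all_order all_algebra.
From mathcomp Require Import all_classical all_reals all_analysis.
From mathcomp Require Import ring lra.
Import Order.TTheory GRing.Theory Num.Theory.
Local Open Scope ring_scope.
Lemma exists_delta (R : realType) (I : finType) (s : I -> R) :
  (forall i, 0 < s i) -> exists2 d : R, 0 < d & forall i, d <= s i.
Proof.
move=> hs; set S := \sum_i (s i)^-1.
have S0 : 0 <= S by apply: sumr_ge0 => i _; by rewrite invr_ge0 ltW.
exists (1 + S)^-1; first by rewrite invr_gt0; lra.
move=> i; rewrite -[s i]invrK lef_pV2 ?posrE ?invr_gt0 //; last by lra.
have : (s i)^-1 <= S.
  rewrite /S (bigD1 i) //= lerDl; apply: sumr_ge0 => j _; by rewrite invr_ge0 ltW.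
lra.
Qed.
Lemma vertex (R : realType) (I J : finType) (e : R) (u : I -> J -> R) :
  0 <= e ->
  (forall i j, 0 <= u i j <= 1) ->
  (forall i j j', `|u i j - u i j'| <= e) ->
  (forall w : I -> J -> R,
     (forall s : R, s = 1 \/ s = -1 ->
        (forall i j, 0 <= u i j + s * w i j <= 1) /\
        (forall i j j', `|(u i j + s * w i j) - (u i j' + s * w i j')| <= e)) ->
     forall i j, w i j = 0) ->
  forall i j, u i j \in [:: 0; e; 1 - e; 1].
Proof.
move=> e0 ub ud H i0 j0.
apply/negPn/negP; rewrite !inE !negb_or => /and4P[/eqP c0 /eqP ce /eqP c1e /eqP c1].
set c := u i0 j0 in c0 ce c1e c1.
pose Jb i j := (i == i0) && [|| u i j == c, u i j == c - e | u i j == c + e].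
have ltx : forall a b : R, a <= b -> a <> b -> a < b.
  by move=> a b h1 h2; rewrite lt_neqAle h1 andbT; apply/eqP.
have F1 : forall i j, Jb i j -> 0 < u i j < 1.
  move=> i j /andP[/eqP -> /or3P[] /eqP hu]; have := ub i0 j; have := ub i0 j0;
    rewrite hu -/c => /andP[h1 h2] /andP[h3 h4]; apply/andP; split.
  - by apply: ltx => // h; apply: c0.
  - by apply: ltx => // h; apply: c1.
  - by apply: ltx => // h; apply: ce; lra.
  - lra.
  - by apply: ltx => [|h]; [lra | apply: c0; lra].
  - by apply: ltx => // h; apply: c1e; lra.
have F2 : forall i j j', Jb i j -> ~~ Jb i j' -> `|u i j - u i j'| < e.
  move=> i j j' hj hj'; rewrite lt_neqAle ud andbT; apply/eqP => heq.
  move: hj hj'; rewrite /Jb => /andP[/eqP ei hj]; rewrite ei eqxx /= => hj'.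
  subst i.
  have hc : `|u i0 j' - c| <= e by apply: ud.
  move: hc; rewrite ler_norml => /andP[hc1 hc2].
  have [hs|hs] := leP 0 (u i0 j - u i0 j'); [rewrite ger0_norm // in heq|rewrite ltr0_norm // in heq];
  move: hj hj'; rewrite !negb_or => /or3P[] /eqP hu /and3P[/eqP n1 /eqP n2 /eqP n3].
  all: first [ apply: n1; lra | apply: n2; lra | apply: n3; lra | idtac ].
  all: try (have e00 : e = 0 by lra); try (apply: n1; lra).
pose sl (k : I * J * J) : R := let: (i, j, j') := k in
  Num.min (if Jb i j then Num.min (u i j) (1 - u i j) else 1)
          (if Jb i j && ~~ Jb i j' then e - `|u i j - u i j'| else 1).
have [d d0 hd] : exists2 d : R, 0 < d & forall k, d <= sl k.
  apply: exists_delta => -[[i j] j'] /=; rewrite lt_min; apply/andP; split.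
    case hJ: (Jb i j) => //; have := F1 _ _ hJ => /andP[h1 h2].
    by rewrite lt_min h1 subr_gt0 h2.
  case hJ: (Jb i j && ~~ Jb i j') => //; move/andP: hJ => [hJ1 hJ2].
  by rewrite subr_gt0; apply: F2.
have hd1 i j : Jb i j -> d <= u i j /\ d <= 1 - u i j.
  move=> hJ; have := hd (i, j, j); rewrite /= hJ /=.
  by rewrite !le_min => /andP[/andP[-> ->] _].
have hd2 i j j' : Jb i j -> ~~ Jb i j' -> d <= e - `|u i j - u i j'|.
  move=> hJ hJ'; have := hd (i, j, j'); rewrite /= hJ hJ' /=.
  by rewrite !le_min => /andP[_ ->].
pose w i j := if Jb i j then d else 0.
have : w i0 j0 = 0.
  apply: H => s hs; split.
    move=> i j; rewrite /w; case hJ: (Jb i j); last by rewrite mulr0 addr0.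
    have [h1 h2] := hd1 _ _ hJ; case: hs => ->; apply/andP; split; lra.
  move=> i j j'; rewrite /w.
  case hJ: (Jb i j); case hJ': (Jb i j').
  - by rewrite opprD addrACA subrr addr0 ud.
  - have h := hd2 _ _ _ hJ (negbT hJ').
    have : `|u i j - u i j'| <= e - d by lra.
    rewrite !ler_norml; case: hs => -> /andP[h1 h2]; apply/andP; split; lra.
  - have h := hd2 _ _ _ hJ' (negbT hJ).
    have : `|u i j - u i j'| <= e - d by rewrite distrC; lra.
    rewrite !ler_norml; case: hs => -> /andP[h1 h2]; apply/andP; split; lra.
  - by rewrite mulr0 !addr0 ud.
rewrite /w /Jb eqxx /= eqxx /=; lra.
Qed.
Definition bv (R : realType) (X Y : finType) (al : X -> Y -> R) (a : bool) x y :=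
  if a then al x y else 1 - al x y.
Arguments bv {R X Y}.

Lemma sum_bv (R : realType) (X Y : finType) (al : X -> Y -> R) x y :
  \sum_(a : bool) bv al a x y = 1.
Proof. by rewrite big_bool /bv /= addrCA subrr addr0. Qed.

Lemma tv_bv (R : realType) (X Y : finType) (al : X -> Y -> R) x y x' y' :
  2^-1 * \sum_(a : bool) `|bv al a x y - bv al a x' y'| = `|al x y - al x' y'|.
Proof.
rewrite big_bool /bv /=.
have -> : 1 - al x y - (1 - al x' y') = - (al x y - al x' y') by ring.
rewrite normrN.
lra.
Qed.

Lemma const_P2 (R : realType) (X Y : finType) (eA eB : R) (d : measure_display)
  (L : measurableType d) (q : probability L R) (al be : X -> Y -> R) :
  (forall x y, 0 <= al x y <= 1) -> (forall x y, 0 <= be x y <= 1) ->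
  (forall x y y', `|al x y - al x y'| <= eA) ->
  (forall y x x', `|be x y - be x' y| <= eB) ->
  in_P2 eA eB (fun a b x y => bv al a x y * bv be b x y).
Proof.
move=> ha hb da db.
exists d, L, q, (fun x y l a => bv al a x y), (fun x y l b => bv be b x y).
split; first by move=> *; exact: measurable_cst.
split; first by move=> *; exact: measurable_cst.
split.
  move=> x y l; split; last exact: sum_bv.
  by case; rewrite /bv; have := ha x y; [case/andP|rewrite subr_ge0; case/andP].
split.
  move=> x y l; split; last exact: sum_bv.
  by case; rewrite /bv; have := hb x y; [case/andP|rewrite subr_ge0; case/andP].
split; first by move=> x y y' l; rewrite tv_bv.
split; first by move=> x x' y l; rewrite tv_bv.
move=> a b x y.
have -> : (fun l : L => ((bv al a x y * bv be b x y)%:E)) = cst (bv al a x y * bv be b x y)%:E by [].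
rewrite integral_cst // -[LHS]mule1; congr (_ * _)%E; apply/esym; exact: probability_setT.
Qed.
Local Open Scope classical_set_scope.

Definition rep (R : realType) (X Y : finType) (eA eB : R) (p : behavior R X Y)
  (d : measure_display) (L : measurableType d) (q : probability L R)
  (pA : X -> Y -> L -> bool -> R) (pB : X -> Y -> L -> bool -> R) : Prop :=
    (forall x y a, measurable_fun setT (fun l => pA x y l a)) /\
        (forall x y b, measurable_fun setT (fun l => pB x y l b)) /\
        (forall x y l, (forall a, 0 <= pA x y l a) /\ \sum_(a : bool) pA x y l a = 1) /\
        (forall x y l, (forall b, 0 <= pB x y l b) /\ \sum_(b : bool) pB x y l b = 1) /\
        (forall x y y' l,
            2^-1 * \sum_(a : bool) `|pA x y l a - pA x y' l a| <= eA) /\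
        (forall x x' y l,
            2^-1 * \sum_(b : bool) `|pB x y l b - pB x' y l b| <= eB) /\
        (forall a b x y,
            ((p a b x y)%:E =
             \int[q]_(l in setT) ((pA x y l a * pB x y l b)%:E))%E).

Arguments rep {R X Y} eA eB p {d L} q pA pB.

Lemma prob01 (R : realType) (F : bool -> R) :
  (forall a, 0 <= F a) -> \sum_(a : bool) F a = 1 -> forall a, 0 <= F a <= 1.
Proof.
move=> h0 h1 a; rewrite big_bool /= in h1; have h2 := h0 true; have h3 := h0 false.
by case: a; apply/andP; split => //; lra.
Qed.

Arguments prob01 {R F}.

Lemma fin_int (R : realType) d (L : measurableType d) (q : probability L R)
  (A : set L) (g : L -> R) : measurable A -> measurable_fun setT g ->
  (forall l, 0 <= g l <= 1) ->
  (0 <= \int[q]_(l in A) (g l)%:E)%E /\ (\int[q]_(l in A) (g l)%:E <= q A)%E /\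
  (\int[q]_(l in A) (g l)%:E)%E \is a fin_num.
Proof.
move=> mA mg hg.
have i0 : (0 <= \int[q]_(l in A) (g l)%:E)%E.
  by apply: integral_ge0 => l _; rewrite lee_fin; case/andP: (hg l).
have i1 : (\int[q]_(l in A) (g l)%:E <= q A)%E.
  apply: (@le_trans _ _ (\int[q]_(l in A) (cst 1%:E) l)%E).
    apply: ge0_le_integral => //.
    - by move=> l _; rewrite lee_fin; case/andP: (hg l).
    - exact/measurable_realfun.measurable_EFinP/measurable_funTS.
    - by move=> l _; rewrite lee_fin; case/andP: (hg l).
  by rewrite integral_cst // mul1e.
split=> //; split=> //.
rewrite ge0_fin_numE //; apply: (le_lt_trans i1); apply: (le_lt_trans (probability_le1 q mA)).
exact: ltey.
Qed.

Arguments fin_int {R d L} q {A g}.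
Lemma mnorm_val (R : realType) d (L : measurableType d) (q : probability L R)
  (B : set L) (mB : measurable B) (s : R) (C : set L) :
  q B = s%:E -> 0 < s ->
  mnormalize (mrestr q mB) q C = (q (C `&` B) * (s^-1)%:E)%E.
Proof.
move=> qB s0.
have E : fine (mrestr q mB [set: L]) = s.
  by rewrite /mrestr setTI qB.
have E' : mrestr q mB [set: L] = s%:E.
  by rewrite /mrestr setTI qB.
rewrite /mnormalize; case: ifPn.
  move=> /orP[] /eqP h.
    have : (s%:E = 0 :> \bar R)%E by rewrite -h; exact/esym/E'.
    by move=> [] h0; move: s0; rewrite h0 ltxx.
  have : s%:E = +oo%E by rewrite -h; exact/esym/E'.
  by [].
by move=> _ /=; congr (_ * (_)^-1%:E)%E; exact: E.
Qed.


Arguments mnorm_val {R d L q B} mB {s} C.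

Lemma int_norm (R : realType) d (L : measurableType d) (q : probability L R)
  (B : set L) (mB : measurable B) (s : R) (g : L -> R) :
  q B = s%:E -> 0 < s -> measurable_fun setT g -> (forall l, 0 <= g l) ->
  (\int[mnormalize (mrestr q mB) q]_(l in setT) (g l)%:E =
     (s^-1)%:E * \int[q]_(l in B) (g l)%:E)%E.
Proof.
move=> qB s0 mg g0.
have mgE := fun D => (measurable_realfun.measurable_EFinP D g).2 (measurable_funTS mg).
rewrite -(setUv B) ge0_integral_setU //; last 3 first.
- exact: measurableC.
- by move=> l _; rewrite lee_fin.
- exact/disj_setPCl.
rewrite (@null_set_integral _ _ _ _ (~` B)) //; last 2 first.
- exact: measurableC.
- have h := mnorm_val mB (~` B) qB s0.
  rewrite setICl measure0 mul0e in h; exact: h.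
rewrite adde0.
have si : 0 <= s^-1 by rewrite invr_ge0 ltW.
rewrite (eq_measure_integral (mscale (NngNum si) q)); last first.
  move=> C mC CB; apply: (eq_trans (mnorm_val mB C qB s0)).
  by rewrite setIidl // /mscale /= muleC.
by rewrite ge0_integral_mscale // => l _; rewrite lee_fin.
Qed.

Arguments int_norm {R d L q B} mB {s g}.
Lemma rep_bounds (R : realType) (X Y : finType) (eA eB : R) (p : behavior R X Y)
  (d : measure_display) (L : measurableType d) (q : probability L R) pA pB :
  rep eA eB p q pA pB ->
  (forall a b x y l, 0 <= pA x y l a * pB x y l b <= 1) /\
  (forall a b x y, measurable_fun setT (fun l => pA x y l a * pB x y l b)).
Proof.
move=> [mpA [mpB [hA [hB _]]]]; split.
  move=> a b x y l; have [hA0 hA1] := hA x y l; have [hB0 hB1] := hB x y l.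
  have /andP[a0 a1] := prob01 hA0 hA1 a; have /andP[b0 b1] := prob01 hB0 hB1 b.
  by rewrite mulr_ge0 //= mulr_ile1.
by move=> a b x y; apply: measurable_realfun.measurable_funM.
Qed.

Arguments rep_bounds {R X Y eA eB p d L q pA pB}.

Lemma cond (R : realType) (X Y : finType) (eA eB : R) (p : behavior R X Y)
  (d : measure_display) (L : measurableType d) (q : probability L R) pA pB
  (A : set L) (mA : measurable A) :
  extreme_point (in_P2 eA eB) p -> rep eA eB p q pA pB ->
  (0 < q A)%E -> (q A < 1)%E ->
  forall a b x y,
    (\int[q]_(l in A) ((pA x y l a * pB x y l b)%:E) = q A * (p a b x y)%:E)%E.
Proof.
move=> [_ hext] hr qA0 qA1.
have [f01 mf] := rep_bounds hr.
have hr' := hr; move: hr' => [mpA [mpB [hA [hB [dA [dB hp]]]]]].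
have qAf : q A \is a fin_num by rewrite ge0_fin_numE ?(ltW qA0) // (lt_trans qA1) ?ltey.
set t := fine (q A).
have qAE : q A = t%:E by rewrite fineK.
have t0 : 0 < t by rewrite -lte_fin -qAE.
have t1 : t < 1 by rewrite -lte_fin -qAE.
have mAc := measurableC mA.
have qC : q (~` A) = (1 - t)%:E by rewrite probability_setC // qAE.
have finA := fun a b x y => (fin_int q mA (mf a b x y) (f01 a b x y)).2.2.
have finC := fun a b x y => (fin_int q mAc (mf a b x y) (f01 a b x y)).2.2.
set FA := fun a b x y => fine (\int[q]_(l in A) ((pA x y l a * pB x y l b)%:E))%E.
set FC := fun a b x y => fine (\int[q]_(l in ~` A) ((pA x y l a * pB x y l b)%:E))%E.
have FAE a b x y : (\int[q]_(l in A) ((pA x y l a * pB x y l b)%:E))%E = (FA a b x y)%:E.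
  by rewrite fineK.
have FCE a b x y : (\int[q]_(l in ~` A) ((pA x y l a * pB x y l b)%:E))%E = (FC a b x y)%:E.
  by rewrite fineK.
have mfE := fun a b x y D => (measurable_realfun.measurable_EFinP D _).2 (measurable_funTS (mf a b x y)).
have pE a b x y : p a b x y = FA a b x y + FC a b x y.
  have := hp a b x y; rewrite -(setUv A) ge0_integral_setU //; last 3 first.
  - exact: mfE.
  - by move=> l _; rewrite lee_fin; case/andP: (f01 a b x y l).
  - exact/disj_setPCl.
  by rewrite FAE FCE => -[].
pose p1 : behavior R X Y := fun a b x y => t^-1 * FA a b x y.
pose p2 : behavior R X Y := fun a b x y => (1 - t)^-1 * FC a b x y.
have P1 : in_P2 eA eB p1.
  exists d, L, (mnormalize (mrestr q mA) q), pA, pB.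
  do 6 (split; first by []).
  move=> a b x y; rewrite (int_norm mA qAE t0 (mf a b x y)); last first.
    by move=> l; case/andP: (f01 a b x y l).
  by rewrite FAE.
have t10 : 0 < 1 - t by lra.
have P2 : in_P2 eA eB p2.
  exists d, L, (mnormalize (mrestr q mAc) q), pA, pB.
  do 6 (split; first by []).
  move=> a b x y; rewrite (int_norm mAc qC t10 (mf a b x y)); last first.
    by move=> l; case/andP: (f01 a b x y l).
  by rewrite FCE.
have heq : p = (fun a b x y => t * p1 a b x y + (1 - t) * p2 a b x y).
  apply: funext => a0; apply: funext => b0; apply: funext => x0; apply: funext => y0.
  rewrite /p1 /p2 pE; field; apply/andP; split; apply/eqP; lra.
have [h1 _] := hext p1 p2 t P1 P2 (andb_true_intro (conj t0 t1)) heq.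
move=> a b x y; rewrite FAE qAE -EFinM; congr (_%:E).
have := congr1 (fun g => g a b x y) h1; rewrite /p1 /= => <-.
by field; apply/eqP; lra.
Qed.
Lemma negl_gt (R : realType) d (L : measurableType d) (q : probability L R)
  (g : L -> R) (c : R) : measurable_fun setT g -> 0 <= c ->
  (forall A, measurable A -> (\int[q]_(l in A) (g l)%:E = q A * c%:E)%E) ->
  q.-negligible [set l | c < g l].
Proof.
move=> mg c0 hA.
set A := [set l | c < g l].
have mA : measurable A.
  have := mg measurableT _ (measurable_itv `]c, +oo[%R); rewrite setTI.
  suff -> : A = g @^-1` `]c, +oo[ by [].
  by apply/seteqP; split => l /=; rewrite in_itv /= andbT.
have mgc := (measurable_realfun.measurable_EFinP A (fun l => g l - c)).2
  (measurable_realfun.measurable_funB (measurable_funTS mg) (measurable_cst c)).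
have h := hA A mA.
rewrite (eq_integral (fun l => (g l - c)%:E + c%:E)%E) in h; last first.
  by move=> l _; rewrite -EFinD subrK.
rewrite ge0_integralD // in h; last first.
  by move=> l; rewrite /A /= => hl; rewrite lee_fin subr_ge0 ltW.
rewrite integral_cst // muleC in h.
have qf : (q A * c%:E)%E \is a fin_num.
  by rewrite fin_numM // ge0_fin_numE ?measure_ge0 // (le_lt_trans (probability_le1 q mA)) ?ltey.
have h0 : (\int[q]_(l in A) (g l - c)%:E = 0)%E.
  by have := congr1 (fun z => z - q A * c%:E)%E h; rewrite /= addeK // subee.
have h0' : (\int[q]_(l in A) `|(g l - c)%:E| = 0)%E.
  rewrite -h0; apply: eq_integral => l; rewrite inE /A /= => hl.
  by rewrite ger0_norm // subr_ge0 ltW.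
have := (ae_eq_integral_abs q mA mgc).1 h0'.
move=> [N [mN qN0 hsub]]; exists N; split => // l Al; apply: hsub => /= /(_ Al) [].
by move/eqP; rewrite subr_eq0 => /eqP e; move: Al; rewrite /A /= e ltxx.
Qed.
Arguments cond {R X Y eA eB p d L q pA pB A} mA.

Lemma allA (R : realType) (X Y : finType) (eA eB : R) (p : behavior R X Y)
  (d : measure_display) (L : measurableType d) (q : probability L R) pA pB :
  extreme_point (in_P2 eA eB) p -> rep eA eB p q pA pB ->
  forall A, measurable A -> forall a b x y,
    (\int[q]_(l in A) ((pA x y l a * pB x y l b)%:E) = q A * (p a b x y)%:E)%E.
Proof.
move=> hext hr A mA a b x y.
have [f01 mf] := rep_bounds hr.
have hr' := hr; move: hr' => [_ [_ [_ [_ [_ [_ hp]]]]]].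
have mfE := fun D => (measurable_realfun.measurable_EFinP D _).2 (measurable_funTS (mf a b x y)).
have [qA0|qA0] : q A = 0%E \/ (0 < q A)%E.
  by have := measure_ge0 q A; rewrite le_eqVlt => /orP[/eqP <-|]; [left|right].
  by rewrite qA0 mul0e null_set_integral.
have [qA1|qA1] : q A = 1%E \/ (q A < 1)%E.
  by have := probability_le1 q mA; rewrite le_eqVlt => /orP[/eqP ->|]; [left|right].
  have qC : q (~` A) = 0%E by rewrite probability_setC // qA1 subee.
  have := hp a b x y; rewrite -(setUv A) ge0_integral_setU //; last 3 first.
  - exact: measurableC.
  - by move=> l _; rewrite lee_fin; case/andP: (f01 a b x y l).
  - exact/disj_setPCl.
  rewrite (@null_set_integral _ _ _ _ (~` A)) //; last exact: measurableC.
  by rewrite adde0 qA1 mul1e => <-.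
exact: (cond mA hext hr qA0 qA1).
Qed.

Arguments allA {R X Y eA eB p d L q pA pB}.

Lemma all_eq (R : realType) (X Y : finType) (eA eB : R) (p : behavior R X Y)
  (d : measure_display) (L : measurableType d) (q : probability L R) pA pB :
  extreme_point (in_P2 eA eB) p -> rep eA eB p q pA pB -> forall a b x y,
  q.-negligible [set l | pA x y l a * pB x y l b != p a b x y].
Proof.
move=> hext hr a b x y.
have [f01 mf] := rep_bounds hr.
have hr' := hr; move: hr' => [_ [_ [_ [_ [_ [_ hp]]]]]].
have hA := allA hext hr.
have /andP[p0 p1] : 0 <= p a b x y <= 1.
  have [h0 [h1 _]] := fin_int q measurableT (mf a b x y) (f01 a b x y).
  rewrite -hp (@probability_setT _ _ _ q) !lee_fin in h0 h1.
  by rewrite h0 h1.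
have N1 : q.-negligible [set l | p a b x y < pA x y l a * pB x y l b].
  by apply: negl_gt => // A mA; exact: hA.
have N2 : q.-negligible [set l | 1 - p a b x y < 1 - pA x y l a * pB x y l b].
  apply: negl_gt.
  - by apply: measurable_realfun.measurable_funB => //; exact: measurable_cst.
  - by rewrite subr_ge0.
  move=> A mA.
  have g01 l : 0 <= 1 - pA x y l a * pB x y l b <= 1.
    by case/andP: (f01 a b x y l) => h0 h1; apply/andP; split; lra.
  have mg : measurable_fun setT (fun l => 1 - pA x y l a * pB x y l b).
    by apply: measurable_realfun.measurable_funB => //; exact: measurable_cst.
  have [_ [_ fg]] := fin_int q mA mg g01.
  have [_ [_ ff]] := fin_int q mA (mf a b x y) (f01 a b x y).
  have qAf : q A \is a fin_num.
    by rewrite ge0_fin_numE ?measure_ge0 // (le_lt_trans (probability_le1 q mA)) ?ltey.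
  have e1 : (\int[q]_(l in A) (cst 1%:E) l = \int[q]_(l in A) ((1 - pA x y l a * pB x y l b)%:E)
             + \int[q]_(l in A) ((pA x y l a * pB x y l b)%:E))%E.
    rewrite -ge0_integralD //; last 4 first.
    - by move=> l _; rewrite lee_fin; case/andP: (g01 l).
    - exact/measurable_realfun.measurable_EFinP/measurable_funTS.
    - by move=> l _; rewrite lee_fin; case/andP: (f01 a b x y l).
    - exact/measurable_realfun.measurable_EFinP/measurable_funTS.
    by apply: eq_integral => l _; rewrite -EFinD subrK.
  rewrite integral_cst // mul1e hA // in e1.
  set t := fine (q A); have qAE : q A = t%:E by rewrite fineK.
  move: e1; rewrite qAE -(fineK fg) -EFinM -EFinD => e1.
  have [e2] := etrans (esym qAE) e1.
  transitivity ((t * (1 - p a b x y))%:E); last first.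
    by rewrite EFinM; congr (_ * _)%E; exact/esym/qAE.
  by rewrite -(fineK fg); congr (_%:E); rewrite mulrBr mulr1; lra.
apply: (negligibleS _ (negligibleU N1 N2)) => l /= hne.
have [h|h|h] := ltgtP (pA x y l a * pB x y l b) (p a b x y).
- by right; lra.
- by left.
- by move: hne; rewrite h eqxx.
Qed.
Arguments all_eq {R X Y eA eB p d L q pA pB}.

Lemma exists_pt (R : realType) (X Y : finType) (eA eB : R) (p : behavior R X Y)
  (d : measure_display) (L : measurableType d) (q : probability L R) pA pB :
  extreme_point (in_P2 eA eB) p -> rep eA eB p q pA pB ->
  exists l, forall a b x y, pA x y l a * pB x y l b = p a b x y.
Proof.
move=> hext hr.
pose M (k : (bool * bool * X * Y)%type) : set L :=
  let: (a, b, x, y) := k in [set l | pA x y l a * pB x y l b != p a b x y].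
have NM : forall s, q.-negligible (\big[setU/set0]_(k <- s) M k).
  elim => [|k s IH]; first by rewrite big_nil; exact: negligible_set0.
  rewrite big_cons; apply: negligibleU => //.
  by case: k => [[[a b] x] y]; exact: (all_eq hext hr).
have mem : forall s l k, k \in s -> M k l -> (\big[setU/set0]_(k <- s) M k) l.
  elim => // k' s IH l k; rewrite inE big_cons => /orP[/eqP ->|ks] h; first by left.
  by right; exact: IH ks h.
have [l hl] : exists l, ~ (\big[setU/set0]_(k <- enum {: bool * bool * X * Y}) M k) l.
  apply/existsNP => hall.
  have : q.-negligible setT by apply: negligibleS (NM _) => l _; exact: hall.
  move/(negligibleP _ measurableT) => h0.
  have : (1 = 0 :> \bar R)%E by rewrite -(@probability_setT _ _ _ q); exact: h0.
  by move/eqP; rewrite onee_eq0.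
exists l => a b x y; apply/eqP/negP => hne; apply: hl.
by apply: (mem _ _ (a, b, x, y)); [rewrite mem_enum | exact/negP].
Qed.
Arguments const_P2 {R X Y eA eB d L} q {al be}.
Arguments vertex {R I J e u}.
Lemma memS (R : realType) (e x : R) :
  x \in [:: 0; e; 1 - e; 1] -> 1 - x \in [:: 0; e; 1 - e; 1].
Proof.
rewrite !inE => /or4P[] /eqP ->.
- by rewrite subr0 eqxx !orbT.
- by rewrite eqxx !orbT.
- have -> : 1 - (1 - e) = e by ring.
  by rewrite eqxx !orbT.
- by rewrite subrr eqxx.
Qed.

Arguments exists_pt {R X Y eA eB p d L q pA pB}.

Local Close Scope classical_set_scope.

Theorem mainTheorem1 (R : realType) (X Y : finType)
  (hX : (1 < #|X|)%N) (hY : (1 < #|Y|)%N) (eA eB : R)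
  (heA : 0 <= eA < 1) (heB : 0 <= eB < 1) (pext : behavior R X Y) :
  extreme_point (in_P2 eA eB) pext ->
  exists (pA : bool -> X -> Y -> R) (pB : bool -> X -> Y -> R),
    [/\ (forall x y, \sum_(a : bool) pA a x y = 1),
        (forall x y, \sum_(b : bool) pB b x y = 1),
        (forall a x y, pA a x y \in [:: 0; eA; 1 - eA; 1]),
        (forall b x y, pB b x y \in [:: 0; eB; 1 - eB; 1]) &
        (forall a b x y, pext a b x y = pA a x y * pB b x y)].
Proof.
move=> hext; have [hP hext2] := hext.
move: hP => [d [L [q [pA [pB hr]]]]].
have hr' : rep eA eB pext q pA pB := hr.
have [l hl] := exists_pt hext hr'.
move: hr' => [_ [_ [hA [hB [dA [dB _]]]]]].
pose u x y := pA x y l true; pose v x y := pB x y l true.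
have pAE a x y : pA x y l a = bv u a x y.
  case: a => //; have [_ h] := hA x y l; rewrite big_bool /= in h.
  by rewrite /bv /u; lra.
have pBE b x y : pB x y l b = bv v b x y.
  case: b => //; have [_ h] := hB x y l; rewrite big_bool /= in h.
  by rewrite /bv /v; lra.
have hpext a b x y : pext a b x y = bv u a x y * bv v b x y by rewrite -hl pAE pBE.
have u01 x y : 0 <= u x y <= 1.
  by have [h0 h1] := hA x y l; exact: (prob01 h0 h1 true).
have v01 x y : 0 <= v x y <= 1.
  by have [h0 h1] := hB x y l; exact: (prob01 h0 h1 true).
have du x y y' : `|u x y - u x y'| <= eA.
  have := dA x y y' l; under eq_bigr do rewrite !pAE.
  by rewrite tv_bv.
have dv y x x' : `|v x y - v x' y| <= eB.
  have := dB x x' y l; under eq_bigr do rewrite !pBE.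
  by rewrite tv_bv.
have eA0 : 0 <= eA by case/andP: heA.
have eB0 : 0 <= eB by case/andP: heB.
have h2 : 0 < (2^-1 : R) < 1 by apply/andP; split; rewrite ?invr_gt0 ?invf_lt1 //; lra.
have hu := @vertex R X Y eA u eA0 u01 du.
have {}hu : forall x y, u x y \in [:: 0; eA; 1 - eA; 1].
  apply: hu => w hw.
  have [b1 d1] := hw 1 (or_introl erefl); have [b2 d2] := hw (-1) (or_intror erefl).
  have P1 := const_P2 q b1 v01 d1 dv.
  have P2 := const_P2 q b2 v01 d2 dv.
  have [|h1 _] := hext2 _ _ 2^-1 P1 P2 h2.
    apply: funext => a; apply: funext => b; apply: funext => x; apply: funext => y.
    by rewrite hpext /bv; case: a; field.
  move=> i j.
  have e1 := congr1 (fun g => g true true i j) h1.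
  have e2 := congr1 (fun g => g true false i j) h1.
  rewrite /= !hpext /bv /= in e1 e2.
  lra.
have hv := @vertex R Y X eB (fun y x => v x y) eB0 (fun y x => v01 x y) dv.
have {}hv : forall y x, v x y \in [:: 0; eB; 1 - eB; 1].
  apply: hv => w hw.
  have [b1 d1] := hw 1 (or_introl erefl); have [b2 d2] := hw (-1) (or_intror erefl).
  have P1 := const_P2 q (be := fun x y => v x y + 1 * w y x) u01 (fun x y => b1 y x) du d1.
  have P2 := const_P2 q (be := fun x y => v x y + -1 * w y x) u01 (fun x y => b2 y x) du d2.
  have [|h1 _] := hext2 _ _ 2^-1 P1 P2 h2.
    apply: funext => a; apply: funext => b; apply: funext => x; apply: funext => y.
    by rewrite hpext /bv; case: b; field.
  move=> i j.
  have e1 := congr1 (fun g => g true true j i) h1.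
  have e2 := congr1 (fun g => g false true j i) h1.
  rewrite /= !hpext /bv /= in e1 e2.
  lra.
exists (bv u), (bv v); split.
- by move=> x y; exact: sum_bv.
- by move=> x y; exact: sum_bv.
- by case=> x y; rewrite /bv; [exact: hu | exact: memS].
- by case=> x y; rewrite /bv; [exact: hv | exact: memS].
- exact: hpext.
Qed.
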